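(* The function $$u(z)=3\frac{(1-|z|^2)^4}{|1-z|^2}+3\frac{(1-|z|^2)^5}{|1-z|^4}-\frac{3}{2}\frac{(1-|z|^2)^4}{|1-z|^4}+\frac{(1-|z|^2)^6}{|1-z|^6},\quad z\in\mathbb{D},$$ is $w_2$-biharmonic in $\mathbb{D}$, i.e. $\Delta\big((1-|z|^2)^{-2}\Delta u\big)=0$ in $\mathbb{D}$.
   Context: $\mathbb{D}$ is the open unit disc and $\Delta=\partial^2/\partial z\partial\bar z$. The weight is $w_2(z)=(1-|z|^2)^2$, and $u$ is called $w_2$-biharmonic if $\Delta w_2^{-1}\Delta u=0$ in $\mathbb{D}$. *)

(* Defs.v *)
From Stdlib Require Import Reals Lra.
From Coquelicot Require Import Coquelicot.
Open Scope R_scope.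

(* Functions on the plane, z = x + i y. *)
(* Delta = d^2/(dz d zbar) = (1/4)(d^2/dx^2 + d^2/dy^2). *)
Definition lapz (f : R -> R -> R) (x y : R) : R :=
  (Derive (fun t => Derive (fun s => f s y) t) x
   + Derive (fun t => Derive (fun s => f x s) t) y) / 4.

Definition absz2 (x y : R) : R := x ^ 2 + y ^ 2.
Definition abs1mz2 (x y : R) : R := (1 - x) ^ 2 + y ^ 2.

Definition w2 (x y : R) : R := (1 - absz2 x y) ^ 2.

Definition u_w2 (x y : R) : R :=
  3 * (1 - absz2 x y) ^ 4 / abs1mz2 x y
  + 3 * (1 - absz2 x y) ^ 5 / (abs1mz2 x y) ^ 2
  - 3 / 2 * (1 - absz2 x y) ^ 4 / (abs1mz2 x y) ^ 2
  + (1 - absz2 x y) ^ 6 / (abs1mz2 x y) ^ 3.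

(* Main.v *)
Require Import Defs.
From Stdlib Require Import Reals Lra.
From Coquelicot Require Import Coquelicot.
Open Scope R_scope.

Definition qq (x y : R) : R := (1 - x) ^ 2 + y ^ 2.
Definition Ux (x y : R) : R := ((18) + (-78)*y^2 + (132)*y^4 + (-108)*y^6 + (42)*y^8 + (-6)*y^10 + (-108)*x^1 + (318)*x^1*y^2 + (-330)*x^1*y^4 + (156)*x^1*y^6 + (-48)*x^1*y^8 + (6)*x^1*y^10 + (6)*x^1*y^12 + (222)*x^2 + (-504)*x^2*y^2 + (228)*x^2*y^4 + (120)*x^2*y^6 + (-18)*x^2*y^8 + (-48)*x^2*y^10 + (-66)*x^3 + (348)*x^3*y^2 + (-252)*x^3*y^4 + (-240)*x^3*y^6 + (174)*x^3*y^8 + (36)*x^3*y^10 + (-444)*x^4 + (204)*x^4*y^2 + (684)*x^4*y^4 + (-204)*x^4*y^6 + (-240)*x^4*y^8 + (678)*x^5 + (-972)*x^5*y^2 + (-432)*x^5*y^4 + (636)*x^5*y^6 + (90)*x^5*y^8 + (-132)*x^6 + (1176)*x^6*y^2 + (-564)*x^6*y^4 + (-480)*x^6*y^6 + (-564)*x^7 + (-336)*x^7*y^2 + (924)*x^7*y^4 + (120)*x^7*y^6 + (570)*x^8 + (-558)*x^8*y^2 + (-480)*x^8*y^4 + (-96)*x^9 + (606)*x^9*y^2 + (90)*x^9*y^4 + (-186)*x^10 + (-240)*x^10*y^2 + (150)*x^11 + (36)*x^11*y^2 + (-48)*x^12 + (6)*x^13) / qq x y ^ 4.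
Definition Uxx (x y : R) : R := ((36) + (-414)*y^2 + (1044)*y^4 + (-1038)*y^6 + (444)*y^8 + (-90)*y^10 + (12)*y^12 + (6)*y^14 + (-348)*x^1 + (1968)*x^1*y^2 + (-3588)*x^1*y^4 + (2496)*x^1*y^6 + (-420)*x^1*y^8 + (-48)*x^1*y^10 + (-60)*x^1*y^12 + (1446)*x^2 + (-3396)*x^2*y^2 + (3510)*x^2*y^4 + (-2088)*x^2*y^6 + (66)*x^2*y^8 + (396)*x^2*y^10 + (66)*x^2*y^12 + (-3240)*x^3 + (2760)*x^3*y^2 + (1680)*x^3*y^4 + (720)*x^3*y^6 + (-1320)*x^3*y^8 + (-600)*x^3*y^10 + (3720)*x^4 + (-3210)*x^4*y^2 + (-5760)*x^4*y^4 + (2220)*x^4*y^6 + (2760)*x^4*y^8 + (270)*x^4*y^10 + (-372)*x^5 + (7392)*x^5*y^2 + (1800)*x^5*y^4 + (-6720)*x^5*y^6 + (-2100)*x^5*y^8 + (-5454)*x^6 + (-8088)*x^6*y^2 + (7668)*x^6*y^4 + (7320)*x^6*y^6 + (570)*x^6*y^8 + (8208)*x^7 + (-240)*x^7*y^2 + (-12720)*x^7*y^4 + (-3600)*x^7*y^6 + (-4860)*x^8 + (9390)*x^8*y^2 + (9180)*x^8*y^4 + (690)*x^8*y^6 + (-900)*x^9 + (-10320)*x^9*y^2 + (-3300)*x^9*y^4 + (3786)*x^10 + (5532)*x^10*y^2 + (486)*x^10*y^4 + (-3048)*x^11 + (-1560)*x^11*y^2 + (1296)*x^12 + (186)*x^12*y^2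 + (-300)*x^13 + (30)*x^14) / qq x y ^ 5.
Definition Uy (x y : R) : R := ((-72)*y^1 + (174)*y^3 + (-114)*y^5 + (12)*y^7 + (-12)*y^9 + (6)*y^11 + (6)*y^13 + (276)*x^1*y^1 + (-672)*x^1*y^3 + (408)*x^1*y^5 + (48)*x^1*y^7 + (-12)*x^1*y^9 + (-48)*x^1*y^11 + (-210)*x^2*y^1 + (780)*x^2*y^3 + (-684)*x^2*y^5 + (-96)*x^2*y^7 + (174)*x^2*y^9 + (36)*x^2*y^11 + (-480)*x^3*y^1 + (240)*x^3*y^3 + (720)*x^3*y^5 + (-240)*x^3*y^7 + (-240)*x^3*y^9 + (894)*x^4*y^1 + (-1404)*x^4*y^3 + (-216)*x^4*y^5 + (636)*x^4*y^7 + (90)*x^4*y^9 + (-168)*x^5*y^1 + (1296)*x^5*y^3 + (-648)*x^5*y^5 + (-480)*x^5*y^7 + (-708)*x^6*y^1 + (-192)*x^6*y^3 + (924)*x^6*y^5 + (120)*x^6*y^7 + (624)*x^7*y^1 + (-624)*x^7*y^3 + (-480)*x^7*y^5 + (-60)*x^8*y^1 + (606)*x^8*y^3 + (90)*x^8*y^5 + (-204)*x^9*y^1 + (-240)*x^9*y^3 + (150)*x^10*y^1 + (36)*x^10*y^3 + (-48)*x^11*y^1 + (6)*x^12*y^1) / qq x y ^ 4.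
Definition Uyy (x y : R) : R := ((-72) + (1026)*y^2 + (-1440)*y^4 + (426)*y^6 + (-120)*y^8 + (54)*y^10 + (96)*y^12 + (30)*y^14 + (420)*x^1 + (-4992)*x^1*y^2 + (6540)*x^1*y^4 + (-1056)*x^1*y^6 + (60)*x^1*y^8 + (-672)*x^1*y^10 + (-300)*x^1*y^12 + (-834)*x^2 + (8364)*x^2*y^2 + (-11970)*x^2*y^4 + (792)*x^2*y^6 + (1770)*x^2*y^8 + (1692)*x^2*y^10 + (186)*x^2*y^12 + (216)*x^3 + (-2616)*x^3*y^2 + (11280)*x^3*y^4 + (-2160)*x^3*y^6 + (-5160)*x^3*y^8 + (-1560)*x^3*y^10 + (1644)*x^4 + (-9570)*x^4*y^2 + (-4680)*x^4*y^4 + (7788)*x^4*y^6 + (6060)*x^4*y^8 + (486)*x^4*y^10 + (-2436)*x^5 + (14208)*x^5*y^2 + (-3960)*x^5*y^4 + (-12000)*x^5*y^6 + (-3300)*x^5*y^8 + (522)*x^6 + (-7608)*x^6*y^2 + (10980)*x^6*y^4 + (9240)*x^6*y^6 + (690)*x^6*y^8 + (1872)*x^7 + (-1200)*x^7*y^2 + (-11760)*x^7*y^4 + (-3600)*x^7*y^6 + (-2016)*x^8 + (5406)*x^8*y^2 + (6840)*x^8*y^4 + (570)*x^8*y^6 + (540)*x^9 + (-4800)*x^9*y^2 + (-2100)*x^9*y^4 + (498)*x^10 + (2316)*x^10*y^2 + (270)*x^10*y^4 + (-552)*x^11 + (-600)*x^11*y^2 + (252)*x^12 + (66)*x^12*y^2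 + (-60)*x^13 + (6)*x^14) / qq x y ^ 5.
Definition G0 (x y : R) : R := ((-9) + (144)*y^2 + (36)*y^4 + (36)*y^6 + (9)*y^8 + (-432)*x^1*y^2 + (-216)*x^1*y^4 + (-72)*x^1*y^6 + (144)*x^2 + (648)*x^2*y^2 + (324)*x^2*y^4 + (36)*x^2*y^6 + (-432)*x^3 + (-720)*x^3*y^2 + (-216)*x^3*y^4 + (612)*x^4 + (540)*x^4*y^2 + (54)*x^4*y^4 + (-504)*x^5 + (-216)*x^5*y^2 + (252)*x^6 + (36)*x^6*y^2 + (-72)*x^7 + (9)*x^8) / qq x y ^ 4.
Definition Gx (x y : R) : R := ((-72) + (720)*y^2 + (-360)*y^4 + (360)*x^1 + (-2160)*x^1*y^2 + (360)*x^1*y^4 + (-720)*x^2 + (2160)*x^2*y^2 + (720)*x^3 + (-720)*x^3*y^2 + (-360)*x^4 + (72)*x^5) / qq x y ^ 5.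
Definition Gxx (x y : R) : R := ((-360) + (5400)*y^2 + (-5400)*y^4 + (360)*y^6 + (2160)*x^1 + (-21600)*x^1*y^2 + (10800)*x^1*y^4 + (-5400)*x^2 + (32400)*x^2*y^2 + (-5400)*x^2*y^4 + (7200)*x^3 + (-21600)*x^3*y^2 + (-5400)*x^4 + (5400)*x^4*y^2 + (2160)*x^5 + (-360)*x^6) / qq x y ^ 6.
Definition Gy (x y : R) : R := ((360)*y^1 + (-720)*y^3 + (72)*y^5 + (-1440)*x^1*y^1 + (1440)*x^1*y^3 + (2160)*x^2*y^1 + (-720)*x^2*y^3 + (-1440)*x^3*y^1 + (360)*x^4*y^1) / qq x y ^ 5.
Definition Gyy (x y : R) : R := ((360) + (-5400)*y^2 + (5400)*y^4 + (-360)*y^6 + (-2160)*x^1 + (21600)*x^1*y^2 + (-10800)*x^1*y^4 + (5400)*x^2 + (-32400)*x^2*y^2 + (5400)*x^2*y^4 + (-7200)*x^3 + (21600)*x^3*y^2 + (5400)*x^4 + (-5400)*x^4*y^2 + (-2160)*x^5 + (360)*x^6) / qq x y ^ 6.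

Lemma D2_compute (f g g1 g2 : R -> R) (P : R -> Prop) (x : R) :
  open P -> P x -> (forall t, P t -> f t = g t) ->
  (forall t, P t -> is_derive g t (g1 t)) -> is_derive g1 x (g2 x) ->
  Derive (fun t => Derive f t) x = g2 x.
Proof.
  intros HP Px Hfg Hg Hg2.
  apply is_derive_unique.
  apply is_derive_ext_loc with (f := g1); [|exact Hg2].
  apply (filter_imp P); [|exact (HP x Px)].
  intros t Pt. symmetry. apply is_derive_unique.
  apply is_derive_ext_loc with (f := g); [|exact (Hg t Pt)].
  apply (filter_imp P); [|exact (HP t Pt)].
  intros s Ps. symmetry. now apply Hfg.
Qed.

Lemma open_poly (h : R -> R) : (forall t, ex_derive h t) -> open (fun t => h t < 1).
Proof.
  intros Hh. apply (open_comp h (fun u => u < 1)); [|apply open_lt].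
  intros t _. exact (ex_derive_continuous (K:=R_AbsRing) (V:=R_NormedModule) h t (Hh t)).
Qed.

Lemma qq_pos x y : absz2 x y < 1 -> qq x y <> 0.
Proof. unfold absz2, qq. intros H Hq. nra. Qed.

Lemma s_pos x y : absz2 x y < 1 -> 1 - absz2 x y <> 0.
Proof. unfold absz2. lra. Qed.

Ltac dtac x y :=
  let Hq := fresh "Hq" in let Hq2 := fresh "Hq2" in
  intros Hq;
  unfold u_w2, absz2, abs1mz2, Ux, Uxx, Uy, Uyy, G0, Gx, Gxx, Gy, Gyy in *; unfold qq in *;
  assert (Hq2 : (1 + - x) * ((1 + - x) * 1) + y * (y * 1) <> 0)
    by (replace ((1 + - x) * ((1 + - x) * 1) + y * (y * 1)) with ((1-x)^2+y^2) by ring; exact Hq);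
  auto_derive;
  [ repeat split; repeat apply Rmult_integral_contrapositive_currified;
    try exact Hq2; try exact Hq; auto with real
  | match goal with |- ?a = ?b => change (@eq R a b) end;
    field; exact Hq ].

Lemma der_Ux x y : qq x y <> 0 -> is_derive (fun s => u_w2 s y) x (Ux x y).
Proof. dtac x y. Qed.
Lemma der_Uxx x y : qq x y <> 0 -> is_derive (fun s => Ux s y) x (Uxx x y).
Proof. dtac x y. Qed.
Lemma der_Uy x y : qq x y <> 0 -> is_derive (fun s => u_w2 x s) y (Uy x y).
Proof. dtac x y. Qed.
Lemma der_Uyy x y : qq x y <> 0 -> is_derive (fun s => Uy x s) y (Uyy x y).
Proof. dtac x y. Qed.
Lemma der_Gx x y : qq x y <> 0 -> is_derive (fun s => G0 s y) x (Gx x y).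
Proof. dtac x y. Qed.
Lemma der_Gxx x y : qq x y <> 0 -> is_derive (fun s => Gx s y) x (Gxx x y).
Proof. dtac x y. Qed.
Lemma der_Gy x y : qq x y <> 0 -> is_derive (fun s => G0 x s) y (Gy x y).
Proof. dtac x y. Qed.
Lemma der_Gyy x y : qq x y <> 0 -> is_derive (fun s => Gy x s) y (Gyy x y).
Proof. dtac x y. Qed.

Lemma qq_of x y : absz2 x y < 1 -> qq x y <> 0.
Proof. apply qq_pos. Qed.

Lemma openx y : open (fun t => absz2 t y < 1).
Proof. apply (open_poly (fun t => absz2 t y)). intros t. unfold absz2. auto_derive. exact I. Qed.
Lemma openy x : open (fun t => absz2 x t < 1).
Proof. apply (open_poly (fun t => absz2 x t)). intros t. unfold absz2. auto_derive. exact I. Qed.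

Lemma lap_u x y : absz2 x y < 1 -> lapz u_w2 x y = (Uxx x y + Uyy x y) / 4.
Proof.
  intros H. unfold lapz.
  rewrite (D2_compute (fun s => u_w2 s y) (fun s => u_w2 s y) (fun t => Ux t y) (fun t => Uxx t y)
             (fun t => absz2 t y < 1) x (openx y) H (fun _ _ => eq_refl)
             (fun t Ht => der_Ux t y (qq_of t y Ht)) (der_Uxx x y (qq_of x y H))).
  rewrite (D2_compute (fun s => u_w2 x s) (fun s => u_w2 x s) (fun t => Uy x t) (fun t => Uyy x t)
             (fun t => absz2 x t < 1) y (openy x) H (fun _ _ => eq_refl)
             (fun t Ht => der_Uy x t (qq_of x t Ht)) (der_Uyy x y (qq_of x y H))).
  reflexivity.
Qed.

Lemma G_eq x y : absz2 x y < 1 -> Rinv (w2 x y) * lapz u_w2 x y = G0 x y.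
Proof.
  intros H. rewrite lap_u by exact H.
  pose proof (qq_of x y H) as Hq. pose proof (s_pos x y H) as Hs.
  unfold w2, Uxx, Uyy, G0, absz2 in *. unfold qq in *.
  field. split; assumption.
Qed.

Theorem proposition3p1 :
  forall x y : R, absz2 x y < 1 ->
    lapz (fun a b => Rinv (w2 a b) * lapz u_w2 a b) x y = 0.
Proof.
  intros x y H. unfold lapz at 1.
  rewrite (D2_compute (fun s => Rinv (w2 s y) * lapz u_w2 s y) (fun s => G0 s y)
             (fun t => Gx t y) (fun t => Gxx t y)
             (fun t => absz2 t y < 1) x (openx y) H (fun t Ht => G_eq t y Ht)
             (fun t Ht => der_Gx t y (qq_of t y Ht)) (der_Gxx x y (qq_of x y H))).
  rewrite (D2_compute (fun s => Rinv (w2 x s) * lapz u_w2 x s) (fun s => G0 x s)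
             (fun t => Gy x t) (fun t => Gyy x t)
             (fun t => absz2 x t < 1) y (openy x) H (fun t Ht => G_eq x t Ht)
             (fun t Ht => der_Gy x t (qq_of x t Ht)) (der_Gyy x y (qq_of x y H))).
  pose proof (qq_of x y H) as Hq.
  unfold Gxx, Gyy in *. unfold qq in *.
  field. exact Hq.
Qed.
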